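(* Suppose $f$ is globally Lipschitz continuous on $\mathbb{R}^{n\times p}$. Then for every $\beta>0$, the function $h$ is bounded below on $\mathbb{R}^{n\times p}$.
   Context: $f:\mathbb{R}^{n\times p}\to\mathbb{R}$ is differentiable with $f$ and $\nabla f$ locally Lipschitz. $\mathcal{A}(X):=\frac32I_p-\frac12X^\top X$, and $h(X):=f(X\mathcal{A}(X))+\frac{\beta}{4}\|X^\top X-I_p\|_F^2$. *)

(* Defs.v *)
From HB Require Import structures.
From mathcomp Require Import all_boot all_order all_algebra.
From mathcomp Require Import all_classical all_reals all_analysis.
Set Implicit Arguments. Unset Strict Implicit. Unset Printing Implicit Defensive.
Import Order.TTheory GRing.Theory Num.Theory.
Import numFieldNormedType.Exports.
Local Open Scope ring_scope.

Section Defs.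
Variables (R : realType) (n p : nat).

Definition frob2 (m k : nat) (A : 'M[R]_(m, k)) : R :=
  \sum_(i < m) \sum_(j < k) A i j ^+ 2.
Definition frob (m k : nat) (A : 'M[R]_(m, k)) : R := Num.sqrt (frob2 A).

Definition Amap (X : 'M[R]_(n, p)) : 'M[R]_p :=
  (3 / 2 : R)%:M - (1 / 2 : R) *: (X^T *m X).

Definition hfun (f : 'M[R]_(n, p) -> R) (beta : R) (X : 'M[R]_(n, p)) : R :=
  f (X *m Amap X) + beta / 4 * frob2 (X^T *m X - 1%:M).

Definition grad (f : 'M[R]_(n, p) -> R) (X : 'M[R]_(n, p)) : 'M[R]_(n, p) :=
  \matrix_(i < n, j < p) ('D_(delta_mx i j) f X).

Definition globally_lipschitz (m k : nat) (F : 'M[R]_(n, p) -> 'M[R]_(m, k)) :=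
  exists L : R, forall X Y, frob (F X - F Y) <= L * frob (X - Y).

Definition locally_lipschitz (m k : nat) (F : 'M[R]_(n, p) -> 'M[R]_(m, k)) :=
  forall X0 : 'M[R]_(n, p), exists r : R, exists L : R, 0 < r /\
    forall X Y, frob (X - X0) < r -> frob (Y - X0) < r ->
      frob (F X - F Y) <= L * frob (X - Y).

Definition scal_fun (f : 'M[R]_(n, p) -> R) : 'M[R]_(n, p) -> 'M[R]_(1, 1) :=
  fun X => (f X)%:M.

Definition bounded_below (g : 'M[R]_(n, p) -> R) :=
  exists m : R, forall X, m <= g X.

End Defs.

(* Main.v *)
Require Import Defs.
From HB Require Import structures.
From mathcomp Require Import all_boot all_order all_algebra.
From mathcomp Require Import all_classical all_reals all_analysis.
From mathcomp Require Import ring lra.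
Import Order.TTheory GRing.Theory Num.Theory.
Import numFieldNormedType.Exports.
Local Open Scope ring_scope.

Set Implicit Arguments. Unset Strict Implicit.
Section Helpers.
Variable R : realType.
Lemma cs_sum (I : finType) (a b : I -> R) :
  (\sum_i a i * b i) ^+ 2 <= (\sum_i a i ^+ 2) * (\sum_i b i ^+ 2).
Proof.
have H : 0 <= \sum_i \sum_j (a i * b j - a j * b i) ^+ 2.
  by apply: sumr_ge0 => i _; apply: sumr_ge0 => j _; exact: sqr_ge0.
have E : \sum_i \sum_j (a i * b j - a j * b i) ^+ 2 =
   \sum_i \sum_j (a i ^+ 2 * b j ^+ 2) + \sum_i \sum_j (a j ^+ 2 * b i ^+ 2)
   - 2 * \sum_i \sum_j (a i * b i * (a j * b j)).
  transitivity (\sum_i \sum_j (a i ^+ 2 * b j ^+ 2 + a j ^+ 2 * b i ^+ 2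
      - 2 * (a i * b i * (a j * b j)))).
    by apply: eq_bigr => i _; apply: eq_bigr => j _; ring.
  under eq_bigr do rewrite sumrB big_split /=.
  rewrite sumrB big_split /=. congr (_ - _).
  rewrite mulr_sumr; apply: eq_bigr => i _; by rewrite mulr_sumr.
have E1 : \sum_i \sum_j (a i ^+ 2 * b j ^+ 2) = (\sum_i a i ^+ 2) * (\sum_i b i ^+ 2).
  by rewrite big_distrl; apply: eq_bigr => i _; rewrite big_distrr.
have E2 : \sum_i \sum_j (a j ^+ 2 * b i ^+ 2) = (\sum_i a i ^+ 2) * (\sum_i b i ^+ 2).
  by rewrite exchange_big.
have E3 : \sum_i \sum_j (a i * b i * (a j * b j)) = (\sum_i a i * b i) ^+ 2.
  by rewrite expr2 big_distrl; apply: eq_bigr => i _; rewrite big_distrr.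
move: H; rewrite E E1 E2 E3; lra.
Qed.

Lemma frob2_ge0 m k (A : 'M[R]_(m, k)) : 0 <= frob2 A.
Proof. by apply: sumr_ge0 => i _; apply: sumr_ge0 => j _; exact: sqr_ge0. Qed.

Lemma trE m k (P Q : 'M[R]_(m, k)) :
  \tr (P^T *m Q) = \sum_(i < m) \sum_(j < k) P i j * Q i j.
Proof.
rewrite /mxtrace exchange_big; apply: eq_bigr => j _.
rewrite mxE; apply: eq_bigr => i _; by rewrite mxE.
Qed.

Lemma cs_mx m k (P Q : 'M[R]_(m, k)) :
  (\sum_(i < m) \sum_(j < k) P i j * Q i j) ^+ 2 <= frob2 P * frob2 Q.
Proof.
rewrite /frob2 !pair_big /=.
exact: (cs_sum (fun x : 'I_m * 'I_k => P x.1 x.2) (fun x => Q x.1 x.2)).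
Qed.

Lemma submul m k l (P : 'M[R]_(m, k)) (Q : 'M[R]_(k, l)) :
  frob2 (P *m Q) <= frob2 P * frob2 Q.
Proof.
rewrite /frob2 big_distrl /=; apply: ler_sum => i _.
rewrite (exchange_big _ _ _ _ _ (fun j l0 => Q j l0 ^+ 2)) big_distrr /=.
apply: ler_sum => l0 _; rewrite mxE.
exact: (cs_sum (fun j => P i j) (fun j => Q j l0)).
Qed.

Lemma keyT p (T : 'M[R]_p) :
  (1%:M - (1/2 : R) *: T) *m (T + 1%:M) *m (1%:M - (1/2 : R) *: T)
  = 1%:M - (3/4 : R) *: (T *m T) + (1/4 : R) *: (T *m T *m T).
Proof.
do ?rewrite ?mulmxBl ?mulmxDl ?mulmxBr ?mulmxDr ?mul1mx ?mulmx1.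
do ?rewrite -?scalemxAl -?scalemxAr ?scalerA ?mulmxA.
move: (T *m T *m T) (T *m T) => T3 T2.
apply/matrixP => i j; rewrite !mxE.
move: (\sum_(j0 < p) _) => s; lra.
Qed.

Lemma keyid n p (X : 'M[R]_(n, p)) :
  let S := X^T *m X in let T := S - 1%:M in
  let A := (3 / 2 : R)%:M - (1 / 2 : R) *: (X^T *m X) in
  (X *m A)^T *m (X *m A) = 1%:M - (3/4 : R) *: (T *m T) + (1/4 : R) *: (T *m T *m T).
Proof.
move=> S T A.
have hS : S = T + 1%:M by rewrite /T subrK.
have hA : A = 1%:M - (1/2 : R) *: T.
  rewrite /A -/S hS; apply/matrixP => i j; rewrite !mxE; case: (i == j); rewrite ?mulr1n ?mulr0n; lra.
have hAt : A^T = A.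
  by rewrite /A linearB /= linearZ /= tr_scalar_mx trmx_mul trmxK.
have -> : (X *m A)^T *m (X *m A) = A^T *m S *m A by rewrite trmx_mul /S !mulmxA.
rewrite hAt hS hA; exact: keyT.
Qed.
Lemma sq_mono (x y : R) : 0 <= y -> x ^+ 2 <= y ^+ 2 -> x <= y.
Proof. move=> hy h; rewrite !expr2 in h; nra. Qed.

Lemma scal_bound (L b q u w s : R) : 0 < b -> 0 <= q -> 0 <= u -> 0 <= s ->
  w ^+ 2 <= u ^+ 3 -> s ^+ 2 <= q + w / 4 ->
  L * s <= b / 4 * u + (2 * L ^+ 2 * (16 * (L ^+ 2) ^+ 2 / b ^+ 4 + 1) / b + L ^+ 2 * q + 1).
Proof.
move=> hb hq hu hs hw hsq.
set a := L ^+ 2. set M := 16 * a ^+ 2 / b ^+ 4.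
set K := 2 * a * (M + 1) / b + a * q + 1.
have ha : 0 <= a by rewrite /a sqr_ge0.
have hM : 0 <= M by rewrite /M; apply: divr_ge0; [nra|apply: exprn_ge0; lra].
have hK1 : 2 * b * K = 4 * a * (M + 1) + 2 * b * (a * q + 1).
  rewrite /K; field; lra.
have hK0 : 0 <= 2 * a * (M + 1) / b by apply: divr_ge0; nra.
have haq : 0 <= a * q by apply: mulr_ge0.
have hKp : 1 <= K by rewrite /K; lra.
have hbKu : 0 <= 2 * b * K * u.
  by apply: mulr_ge0 => //; apply: mulr_ge0; [apply: mulr_ge0|]; lra.
have hKq : a * q <= K ^+ 2.
  rewrite expr2; have : 0 <= a * q by nra. rewrite /K; nra.
have hw4 : 4 * a * w <= b ^+ 2 * u ^+ 2 + 2 * b * K * u.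
  have [hu2|hu2] := leP M u.
  - have : 4 * a * w <= b ^+ 2 * u ^+ 2.
      have [hw0|hw0] := leP w 0; first by nra.
      apply: sq_mono; first by nra.
      have hMb : M * b ^+ 4 = 16 * a ^+ 2 by rewrite /M; field; apply: lt0r_neq0 => //; apply: exprn_gt0.
      have e1 : (4 * a * w) ^+ 2 = 16 * a ^+ 2 * w ^+ 2 by ring.
      have e2 : (b ^+ 2 * u ^+ 2) ^+ 2 = b ^+ 4 * u * u ^+ 3 by ring.
      rewrite e1 e2 -hMb.
      have hb4 : 0 <= b ^+ 4 by apply: exprn_ge0; lra.
      have hu3 : 0 <= u ^+ 3 by apply: exprn_ge0.
      have : M * b ^+ 4 * w ^+ 2 <= M * b ^+ 4 * u ^+ 3 by apply: ler_wpM2l => //; nra.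
      have : M * b ^+ 4 * u ^+ 3 <= b ^+ 4 * u * u ^+ 3.
        have h0 : 0 <= (u - M) * (b ^+ 4 * u ^+ 3).
          by apply: mulr_ge0; [lra | apply: mulr_ge0].
        move: h0; set c := b ^+ 4 * u ^+ 3.
        have -> : b ^+ 4 * u * u ^+ 3 = u * c by rewrite /c; ring.
        have -> : M * b ^+ 4 * u ^+ 3 = M * c by rewrite /c; ring.
        lra.
      lra.
        lra.
  - have hwM : w <= (M + 1) * u.
      apply: sq_mono; first by nra.
      have : u ^+ 3 <= M * u ^+ 2 by rewrite expr2 exprS expr2; nra.
      have : M * u ^+ 2 <= (M + 1) ^+ 2 * u ^+ 2 by rewrite !expr2; nra.
      rewrite exprMn; lra.
    have h1 : 0 <= b ^+ 2 * u ^+ 2 by apply: mulr_ge0; apply: exprn_ge0; lra.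
    have h2 : 4 * a * w <= 4 * a * ((M + 1) * u) by apply: ler_wpM2l => //; lra.
    have h3 : 0 <= 2 * b * (a * q + 1) * u.
      by apply: mulr_ge0 => //; apply: mulr_ge0; lra.
    rewrite hK1; move: h1 h2 h3; set z := b ^+ 2 * u ^+ 2.
    have -> : 4 * a * ((M + 1) * u) = 4 * a * (M + 1) * u by ring.
    set y := 4 * a * (M + 1). set x := 2 * b * (a * q + 1).
    rewrite mulrDl; lra.
have hQ : 0 <= b / 4 * u + K by rewrite /K; nra.
have [hL|hL] := leP (L * s) 0; first by lra.
apply: sq_mono => //.
have e : (L * s) ^+ 2 = a * s ^+ 2 by rewrite /a; ring.
rewrite e.
have : a * s ^+ 2 <= a * (q + w / 4) by apply: ler_wpM2l.
have e2 : (b / 4 * u + K) ^+ 2 = b ^+ 2 * u ^+ 2 / 16 + 2 * b * K * u / 4 + K ^+ 2 by field.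
rewrite e2; nra.
Qed.
End Helpers.

Theorem mainTheorem6 (R : realType) (n p : nat) (f : 'M[R]_(n, p) -> R)
  (f_diff : forall X : 'M[R]_(n, p), differentiable f X)
  (f_loclip : locally_lipschitz (scal_fun f))
  (grad_loclip : locally_lipschitz (grad f))
  (f_lip : globally_lipschitz (scal_fun f)) :
  forall beta : R, 0 < beta -> bounded_below (hfun f beta).
Proof.
move=> beta hb; case: f_lip => L hL.
exists (f 0 - (2 * L ^+ 2 * (16 * (L ^+ 2) ^+ 2 / beta ^+ 4 + 1) / beta
               + L ^+ 2 * (p%:R : R) + 1)).
move=> X; rewrite /hfun.
set Y := X *m Amap X. set T := X^T *m X - 1%:M.
have hTt : T^T = T.
  by rewrite /T linearB /= trmx_mul trmxK trmx1.
have hfr (m k : nat) (B : 'M[R]_(m, k)) : frob2 B = \tr (B^T *m B).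
  by rewrite trE /frob2; apply: eq_bigr => i _; apply: eq_bigr => j _; rewrite expr2.
have hv : frob2 Y = p%:R - 3/4 * frob2 T + 1/4 * \tr (T *m T *m T).
  rewrite hfr /Y /Amap (keyid X) -/T [frob2 T]hfr hTt.
  clearbody T.
  by rewrite !linearD !linearN !linearZ /= mxtrace1.
have hw : (\tr (T *m T *m T)) ^+ 2 <= frob2 T ^+ 3.
  rewrite mxtrace_mulC -{1}hTt trE.
  apply: (le_trans (cs_mx T (T *m T))).
  rewrite exprS expr2; apply: ler_wpM2l; first exact: frob2_ge0.
  exact: submul.
have hlip := hL Y 0.
have e : frob (scal_fun f Y - scal_fun f 0) = `|f Y - f 0|.
  by rewrite /frob /frob2 /scal_fun !big_ord1 !mxE /= !mulr1n sqrtr_sqr.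
rewrite subr0 e /frob in hlip.
have hY0 := frob2_ge0 Y.
have hT0 := frob2_ge0 T.
have hs := sqrtr_ge0 (frob2 Y).
have hsq : Num.sqrt (frob2 Y) ^+ 2 <= p%:R + \tr (T *m T *m T) / 4.
  rewrite sqr_sqrtr // hv; lra.
have := scal_bound L hb (ler0n _ p) hT0 hs hw hsq.
have := ler_norm (f 0 - f Y); rewrite distrC.
lra.
Qed.
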